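(* Consider the job set $J$ described in the context with $p_\ell$ sufficiently large. Let $j\in\{3,\dots,n\}$ and let $\sigma=(M_1,M_2)$ be a schedule of $J$ with $\omega_j(\sigma)=0$, $\omega_i(\sigma)=1$ for all $i\in\{1,\dots,j-1\}$, and $\ell\in M_1$. Then $\sigma$ can be improved, by a sequence of improving 3-swaps, to a schedule with $\omega_j=1$ and $\omega_i=0$ for all $i\in\{1,\dots,j-1\}$.
   Context: Two identical machines; a schedule $\sigma=(M_1,M_2)$ partitions the jobs into sets processed on machines 1 and 2, with loads $L_i=\sum_{j\in M_i}p_j$ and makespan $\max_iL_i$. Fix $n\ge3$ and the job set $J=\{a_i,b_i,c_i:1\le i\le n\}\cup\{\ell\}$ with $p_{a_i}=2^{n+i+1}+2^{i-1}$, $p_{b_i}=2^{n+i}$, $p_{c_i}=2^{n+i-1}+2^{i-1}$, and $p_\ell$ a sufficiently large number. For each $i$ define $\omega_i(\sigma)=0$ if $a_i\in M_1$ and $b_i,c_i\in M_2$; $\omega_i(\sigma)=1$ if $a_i\in M_2$ and $b_i,c_i\in M_1$; and $\omega_i(\sigma)=-1$ otherwise. A 3-swap interchanges the machine assignments of exactly three jobs (some on each machine); it is improving if the makespan strictly decreases. *)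

(* Defs.v *)
From mathcomp Require Import all_boot all_order all_algebra.
Set Implicit Arguments. Unset Strict Implicit. Unset Printing Implicit Defensive.

(* Jobs: [Some (t, k)] with t = 0,1,2 for a, b, c and k : 'I_n the
   (0-based) index, i.e. paper index i = k + 1; [None] is the long job ell. *)
Definition job (n : nat) := option ('I_3 * 'I_n)%type.

Definition ja n (k : 'I_n) : job n := Some (ord0, k).
Definition jb n (k : 'I_n) : job n := Some (inord 1, k).
Definition jc n (k : 'I_n) : job n := Some (inord 2, k).
Definition jl n : job n := None.

Definition ptime (n pl : nat) (x : job n) : nat :=
  match x with
  | None => pl
  | Some (t, k) =>
      let i := (k : nat).+1 in
      if (t : nat) == 0 then 2 ^ (n + i + 1) + 2 ^ (i - 1)
      else if (t : nat) == 1 then 2 ^ (n + i)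
      else 2 ^ (n + i - 1) + 2 ^ (i - 1)
  end.

(* A schedule: [s x = true] iff job x is on machine 1 (else machine 2). *)
Definition schedule (n : nat) := job n -> bool.

Definition load1 n pl (s : schedule n) : nat := \sum_(x : job n | s x) ptime pl x.
Definition load2 n pl (s : schedule n) : nat := \sum_(x : job n | ~~ s x) ptime pl x.
Definition makespan n pl (s : schedule n) : nat := maxn (load1 pl s) (load2 pl s).

Definition omega n (s : schedule n) (k : 'I_n) : int :=
  if [&& s (ja k), ~~ s (jb k) & ~~ s (jc k)] then Posz 0
  else if [&& ~~ s (ja k), s (jb k) & s (jc k)] then Posz 1
  else Negz 0.

Definition three_swap n (s s' : schedule n) : Prop :=
  exists S : {set job n},
    [/\ #|S| = 3,
        (exists2 x, x \in S & s x),
        (exists2 y, y \in S & ~~ s y) &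
        forall z, s' z = (if z \in S then ~~ s z else s z)].

Definition improving_three_swap n pl (s s' : schedule n) : Prop :=
  three_swap s s' /\ makespan pl s' < makespan pl s.

Inductive improves_to n pl : schedule n -> schedule n -> Prop :=
  | imp_refl s : improves_to pl s s
  | imp_step s s' s'' : improving_three_swap pl s s' -> improves_to pl s' s'' ->
                        improves_to pl s s''.

(* Main.v *)
Require Import Defs.
From mathcomp Require Import all_boot all_order all_algebra zify.
Set Implicit Arguments. Unset Strict Implicit.

Section S.
Variable n : nat.

Definition pt (t k : nat) : nat :=
  if t == 0 then 2^n*2^k*4 + 2^k else if t == 1 then 2^n*2^k*2 else 2^n*2^k + 2^k.

Lemma ptimeE pl (t : 'I_3) (k : 'I_n) : ptime pl (Some (t,k) : job n) = pt t k.
Proof.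
rewrite /ptime /pt.
have -> : n + k.+1 + 1 = n + k + 2 by lia.
have -> : n + k.+1 - 1 = n + k by lia.
have -> : n + k.+1 = n + k + 1 by lia.
have -> : k.+1 - 1 = k by lia.
have e1 : 2^(n+k+2) = 2^n*2^k*4 by rewrite (expnD 2 (n+k)) (expnD 2 n).
have e2 : 2^(n+k+1) = 2^n*2^k*2 by rewrite (expnD 2 (n+k)) (expnD 2 n).
by rewrite e1 e2 (expnD 2 n).
Qed.

Definition P0 := \sum_(x : job n) ptime 0 x.

Lemma load1_ge pl (s : schedule n) : s None -> pl <= load1 pl s.
Proof. move=> h; rewrite /load1 (bigD1 None) //=; exact: leq_addr. Qed.

Lemma load2_le pl (s : schedule n) : s None -> load2 pl s <= P0.
Proof.
move=> h; rewrite /load2 /P0.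
rewrite [X in _ <= X](bigID (fun x => ~~ s x)) /=.
rewrite -[X in X <= _]addn0; apply: leq_add => //.
have -> : \sum_(x | ~~ s x) ptime pl x = \sum_(x | ~~ s x) ptime 0 x.
  by apply: eq_bigr; case=> [[t k]|] //; rewrite h.
by [].
Qed.

Lemma mkE pl (s : schedule n) : P0 <= pl -> s None -> makespan pl s = load1 pl s.
Proof.
move=> hp hs; rewrite /makespan; apply/maxn_idPl.
have := load2_le pl hs. have := load1_ge pl hs. lia.
Qed.

Lemma load1_sw pl (s s' : schedule n) x y z :
  x != y -> x != z -> y != z ->
  (forall w, s' w = if w \in [set x; y; z] then ~~ s w else s w) ->
  load1 pl s' + ((if s x then ptime pl x else 0) + (if s y then ptime pl y else 0)
     + (if s z then ptime pl z else 0)) =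
  load1 pl s + ((if s' x then ptime pl x else 0) + (if s' y then ptime pl y else 0)
     + (if s' z then ptime pl z else 0)).
Proof.
move=> xy xz yz hs.
have split3 : forall F : job n -> nat, \sum_i F i =
    F x + F y + F z + \sum_(i | [&& i != x, i != y & i != z]) F i.
  move=> F; rewrite (bigD1 x) //= (bigD1 y) //= ?(eq_sym y) //= (bigD1 z) /=; last first.
    by rewrite (eq_sym z) xz (eq_sym z) yz.
  rewrite !addnA; congr (_ + _); apply: eq_bigl => i.
  by rewrite andbA.
have L1 : forall s0 : schedule n, load1 pl s0 = \sum_i (if s0 i then ptime pl i else 0).
  by move=> s0; rewrite /load1 big_mkcond.
rewrite !L1 split3 [in RHS]split3.
have -> : \sum_(i | [&& i != x, i != y & i != z]) (if s' i then ptime pl i else 0) =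
   \sum_(i | [&& i != x, i != y & i != z]) (if s i then ptime pl i else 0).
  apply: eq_bigr => i /and3P [ix iy iz].
  by rewrite hs !inE (negbTE ix) (negbTE iy) (negbTE iz).
move: (\sum_(i | _) _) (if s x then _ else _) (if s y then _ else _) (if s z then _ else _)
 (if s' x then _ else _) (if s' y then _ else _) (if s' z then _ else _).
move=> *; lia.
Qed.

Lemma improve pl (s s' : schedule n) x y z :
  P0 <= pl -> s None -> x != None -> y != None -> z != None ->
  x != y -> x != z -> y != z ->
  (forall w, s' w = if w \in [set x; y; z] then ~~ s w else s w) ->
  [|| s x, s y | s z] -> ~~ [&& s x, s y & s z] ->
  (if s x then 0 else ptime pl x) + (if s y then 0 else ptime pl y)
     + (if s z then 0 else ptime pl z) <
  (if s x then ptime pl x else 0) + (if s y then ptime pl y else 0)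
     + (if s z then ptime pl z else 0) ->
  improving_three_swap pl s s'.
Proof.
move=> hp hN xN yN zN xy xz yz hs h1 h2 hlt.
have hN' : s' None.
  by rewrite hs !inE !(eq_sym None) (negbTE xN) (negbTE yN) (negbTE zN).
split.
  exists [set x; y; z]; split => //.
  - rewrite setUC cardsU1 cards2 !inE (eq_sym z) (negbTE xz) (eq_sym z) (negbTE yz) xy //.
  - by case/or3P: h1 => h; [exists x|exists y|exists z]; rewrite // !inE eqxx ?orbT.
  - by move: h2; case hx: (s x); case hy: (s y); case hz: (s z) => //= _;
      [exists z|exists y|exists y|exists x|exists x|exists x|exists x];
      rewrite ?hx ?hy ?hz // !inE eqxx ?orbT.
rewrite (mkE hp hN) (mkE hp hN').
have := load1_sw pl xy xz yz hs.
rewrite !hs !inE !eqxx ?orbT.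
move: hlt; case: (s x); case: (s y); case: (s z) => /=; lia.
Qed.

Lemma imp_trans pl (s1 s2 s3 : schedule n) :
  improves_to pl s1 s2 -> improves_to pl s2 s3 -> improves_to pl s1 s3.
Proof. by elim => // ? ? ? h _ IH /IH; apply: imp_step h. Qed.

Definition gen (J : nat) (g : nat -> nat -> bool) (s : schedule n) : schedule n :=
  fun w => match w with
           | Some (t, k) => if (k : nat) <= J then g (t : nat) (k : nat) else s w
           | None => s w end.

Definition flip3 (tx kx ty ky tz kz : nat) (g : nat -> nat -> bool) (t k : nat) :=
  if [|| (t == tx) && (k == kx), (t == ty) && (k == ky) | (t == tz) && (k == kz)]
  then ~~ g t k else g t k.

Lemma someE (t t' : 'I_3) (k k' : 'I_n) :
  (Some (t, k) == Some (t', k') :> job n) = ((t : nat) == t') && ((k : nat) == k').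
Proof. by []. Qed.

Lemma gstep pl J (s0 s : schedule n) g g' tx kx ty ky tz kz
  (htx : tx < 3) (hty : ty < 3) (htz : tz < 3)
  (hkx : kx < n) (hky : ky < n) (hkz : kz < n) :
  P0 <= pl -> s None -> kx <= J -> ky <= J -> kz <= J ->
  (tx != ty) || (kx != ky) -> (tx != tz) || (kx != kz) -> (ty != tz) || (ky != kz) ->
  (forall w, s0 w = gen J g s w) ->
  (forall t k, t < 3 -> k <= J -> g' t k = flip3 tx kx ty ky tz kz g t k) ->
  [|| g tx kx, g ty ky | g tz kz] -> ~~ [&& g tx kx, g ty ky & g tz kz] ->
  (if g tx kx then 0 else pt tx kx) + (if g ty ky then 0 else pt ty ky)
     + (if g tz kz then 0 else pt tz kz) <
  (if g tx kx then pt tx kx else 0) + (if g ty ky then pt ty ky else 0)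
     + (if g tz kz then pt tz kz else 0) ->
  improving_three_swap pl s0 (gen J g' s).
Proof.
move=> hp hN hxJ hyJ hzJ dxy dxz dyz hs0 hg h1 h2 hlt.
pose x : job n := Some (Ordinal htx, Ordinal hkx).
pose y : job n := Some (Ordinal hty, Ordinal hky).
pose z : job n := Some (Ordinal htz, Ordinal hkz).
have ex : s0 x = g tx kx by rewrite hs0 /= hxJ.
have ey : s0 y = g ty ky by rewrite hs0 /= hyJ.
have ez : s0 z = g tz kz by rewrite hs0 /= hzJ.
apply: (@improve pl s0 (gen J g' s) x y z) => //.
- by rewrite hs0.
- by rewrite /x /y someE /= negb_and.
- by rewrite /x /z someE /= negb_and.
- by rewrite /y /z someE /= negb_and.
- case=> [[t k]|]; last by rewrite !inE hs0.
  rewrite !inE !someE /= hs0 /=.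
  case: leqP => hk.
    by rewrite hg // /flip3 -orbA.
  have hne : forall kk, kk <= J -> ((k : nat) == kk) = false.
    by move=> kk hkk; apply/eqP => e; move: hk; rewrite e ltnNge hkk.
  by rewrite (hne _ hxJ) (hne _ hyJ) (hne _ hzJ) !andbF.
- by rewrite ex ey ez.
- by rewrite ex ey ez.
- by rewrite ex ey ez !ptimeE.
Qed.

End S.

Ltac bsolve := repeat match goal with
 | |- context [?a == ?b :> nat] => case: (@eqP nat a b) => ?
 | |- context [(?a <= ?b)%N] => case: (leqP a b) => ?
 end; try done; try (exfalso; lia).

Definition init (J t k : nat) : bool := if k < J then t != 0 else t == 0.
Definition st (J m t k : nat) : bool :=
  if k == J then t != 1 else if t == 0 then k < m
  else if t == 1 then (m <= k) && (k.+2 <= J) else m < k.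
Definition gF (J t k : nat) : bool := if k == J then t != 0 else t == 0.

Lemma omega1 n (s : schedule n) k : omega s k = Posz 1 ->
  [/\ s (ja k) = false, s (jb k) = true & s (jc k) = true].
Proof. by rewrite /omega; case: (s (ja k)); case: (s (jb k)); case: (s (jc k)). Qed.

Lemma omega0 n (s : schedule n) k : omega s k = Posz 0 ->
  [/\ s (ja k) = true, s (jb k) = false & s (jc k) = false].
Proof. by rewrite /omega; case: (s (ja k)); case: (s (jb k)); case: (s (jc k)). Qed.

Lemma tcase n (t : 'I_3) (k : 'I_n) :
  [\/ (t : nat) = 0 /\ Some (t, k) = ja k, (t : nat) = 1 /\ Some (t, k) = jb k
    | (t : nat) = 2 /\ Some (t, k) = jc k].
Proof.
case: t => [[|[|[|m]]] ht] //.
- by constructor 1; split => //; rewrite /ja; congr (Some (_, _)); apply: val_inj.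
- by constructor 2; split => //; rewrite /jb; congr (Some (_, _)); apply: val_inj; rewrite /= inordK.
- by constructor 3; split => //; rewrite /jc; congr (Some (_, _)); apply: val_inj; rewrite /= inordK.
Qed.

Lemma pt_eq n t k : pt n t k = if t == 0 then 2^n*2^k*4 + 2^k else if t == 1 then 2^n*2^k*2 else 2^n*2^k + 2^k.
Proof. by []. Qed.

Lemma pw2 J t k : 2 <= J -> t < 3 -> k <= J ->
  st J 1 t k = flip3 2 0 1 J.-1 2 J (flip3 1 0 2 1 0 0 (init J)) t k.
Proof.
move=> hJ; case: t => [|[|[|t]]] // _ hk; rewrite /flip3 /st /init /=; bsolve.
Qed.
Lemma pwl J m t k : 1 <= m -> m.+2 <= J -> t < 3 -> k <= J ->
  st J m.+1 t k = flip3 1 m 2 m.+1 0 m (st J m) t k.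
Proof.
move=> h1 h2; case: t => [|[|[|t]]] // _ hk; rewrite /flip3 /st /=; bsolve.
Qed.
Lemma pw3 J t k : 2 <= J -> t < 3 -> k <= J ->
  gF J t k = flip3 0 J 0 J.-1 1 J (st J J.-1) t k.
Proof.
move=> hJ; case: t => [|[|[|t]]] // _ hk; rewrite /flip3 /st /gF /=; bsolve.
Qed.

Lemma ar1 n : pt n 0 0 < pt n 1 0 + pt n 2 1.
Proof. rewrite /pt /= expn0 expn1; lia. Qed.
Lemma ar2 n J : 2 <= J -> J < n -> pt n 2 J < pt n 2 0 + pt n 1 J.-1.
Proof.
move=> h1 h2; have hp : 2 ^ J < 2 ^ n by rewrite ltn_exp2l.
case: J h1 h2 hp => [|J] // h1 h2 hp; rewrite /pt /= expn0 expnS in hp *.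
nia.
Qed.
Lemma ar3 n m : pt n 0 m < pt n 1 m + pt n 2 m.+1.
Proof. rewrite /pt /= expnS; nia. Qed.
Lemma ar4 n J : 1 <= J -> pt n 0 J.-1 + pt n 1 J < pt n 0 J.
Proof. case: J => [|J] // _; rewrite /pt /= expnS; nia. Qed.

Theorem lemma9 (n : nat) (hn : 3 <= n) :
  exists P : nat, forall pl : nat, P <= pl ->
  forall (j : 'I_n) (s : schedule n),
    2 <= j ->
    omega s j = Posz 0 ->
    (forall i : 'I_n, i < j -> omega s i = Posz 1) ->
    s (jl n) = true ->
    exists s' : schedule n,
      [/\ improves_to pl s s',
          omega s' j = Posz 1 &
          forall i : 'I_n, i < j -> omega s' i = Posz 0].
Proof.
exists (P0 n) => pl hpl j s hj h0 h1 hl.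
have hJn : (j : nat) < n := ltn_ord j.
set J := (j : nat) in hj hJn.
have hN : s None := hl.
have hinit : forall w, s w = gen J (init J) s w.
  case=> [[t k]|] //=; case: leqP => hk //.
  rewrite /init; case: ltnP => hkJ.
    have [ea eb ec] := omega1 (h1 k hkJ).
    by case: (tcase t k) => [[-> ->]|[-> ->]|[-> ->]].
  have ekj : k = j by apply: val_inj; apply/eqP; rewrite eqn_leq hk hkJ.
  subst k; have [ea eb ec] := omega0 h0.
  by case: (tcase t j) => [[-> ->]|[-> ->]|[-> ->]].
exists (gen J (gF J) s); split.
- have hpow : 2 ^ J < 2 ^ n by rewrite ltn_exp2l.
  have h0n : 0 < n by lia.
  have h1n : 1 < n by lia.
  have hJ1n : J.-1 < n by lia.
  have hJ1 : 1 < J := hj.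
  have step1 : improving_three_swap pl s (gen J (flip3 1 0 2 1 0 0 (init J)) s).
    have v1 : init J 1 0 = true by rewrite /init; bsolve.
    have v2 : init J 2 1 = true by rewrite /init; bsolve.
    have v3 : init J 0 0 = false by rewrite /init; bsolve.
    apply: (@gstep n pl J s s (init J) _ 1 0 2 1 0 0 erefl erefl erefl h0n h1n h0n) => //;
      rewrite ?v1 ?v2 ?v3 //; try lia.
    by rewrite ?add0n ?addn0; apply: ar1.
  have step2 : improving_three_swap pl (gen J (flip3 1 0 2 1 0 0 (init J)) s) (gen J (st J 1) s).
    have v1 : flip3 1 0 2 1 0 0 (init J) 2 0 = true by rewrite /flip3 /init; bsolve.
    have v2 : flip3 1 0 2 1 0 0 (init J) 1 J.-1 = true by rewrite /flip3 /init; bsolve.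
    have v3 : flip3 1 0 2 1 0 0 (init J) 2 J = false by rewrite /flip3 /init; bsolve.
    apply: (@gstep n pl J _ s _ (st J 1) 2 0 1 J.-1 2 J erefl erefl erefl h0n hJ1n hJn) => //;
      rewrite ?v1 ?v2 ?v3 //.
    all: try (by move=> t k; apply: pw2).
    all: try (by rewrite ?add0n ?addn0; apply: ar2).
    all: try (apply/orP; right; apply/eqP; lia).
    all: try lia.
  have loop : forall d, d.+2 <= J -> improves_to pl (gen J (st J 1) s) (gen J (st J d.+1) s).
    elim=> [|d IH] hd; first exact: imp_refl.
    apply: (imp_trans (IH (ltnW hd))).
    apply: imp_step (imp_refl _ _).
    have hd1 : d.+1 < n by lia.
    have hd2 : d.+2 < n by lia.
    have w1 : st J d.+1 1 d.+1 = true by rewrite /st; bsolve.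
    have w2 : st J d.+1 2 d.+2 = true by rewrite /st; bsolve.
    have w3 : st J d.+1 0 d.+1 = false by rewrite /st; bsolve.
    apply: (@gstep n pl J _ s _ (st J d.+2) 1 d.+1 2 d.+2 0 d.+1 erefl erefl erefl hd1 hd2 hd1) => //;
      rewrite ?w1 ?w2 ?w3 //.
    all: try (by move=> t k; apply: pwl).
    all: try (by rewrite ?add0n ?addn0; apply: ar3).
    all: try lia.
  have step3 : improving_three_swap pl (gen J (st J J.-1) s) (gen J (gF J) s).
    have u1 : st J J.-1 0 J = true by rewrite /st; bsolve.
    have u2 : st J J.-1 0 J.-1 = false by rewrite /st; bsolve.
    have u3 : st J J.-1 1 J = false by rewrite /st; bsolve.
    apply: (@gstep n pl J _ s _ (gF J) 0 J 0 J.-1 1 J erefl erefl erefl hJn hJ1n hJn) => //;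
      rewrite ?u1 ?u2 ?u3 //.
    all: try (by move=> t k; apply: pw3).
    all: try (by rewrite ?add0n ?addn0; apply: ar4; lia).
    all: try (apply/orP; right; apply/eqP; lia).
    all: try lia.
  apply: imp_step step1 _; apply: imp_step step2 _.
  apply: imp_trans (loop J.-2 _) _; first lia.
  have -> : J.-2.+1 = J.-1 by lia.
  exact: imp_step step3 (imp_refl _ _).
- by rewrite /omega /gen /= !inordK // leqnn /gF /J eqxx.
- move=> i hi; rewrite /omega /gen /= !inordK // ltnW // /gF (ltn_eqF hi) /=. by [].
Qed.
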